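(* In the M/M/1 setting below, let $p^S_s:=R-C\,\mathbb{E}[W(q^S_s\Lambda)]$ be the fee that induces the joining probability $q^S_s$ in the shared belief case. If $p^S_s\ge0$, then $q^S_s\le q^S_e$; moreover, if $p^S_s=0$ then $q^S_s=q^S_e$.
   Context: Setting: an M/M/1 queue with true (deterministic) Poisson arrival rate $\lambda>0$ and exponential service times with rate $\mu$, so the expected time in system at effective arrival rate $x\in[0,\mu)$ is $W(x)=1/(\mu-x)$. Each served customer receives reward $R$ and incurs waiting cost $C>0$ per unit time, with $R\ge C/\mu$. Customers' beliefs about the arrival rate are described by a non-degenerate nonnegative random variable $\Lambda$ whose support has minimum $\lambda_{\min}$ and maximum $\lambda_{\max}$, with $0\le\lambda_{\min}<\lambda<\lambda_{\max}<\mu$. The social welfare rate as a function of the joining probability $q\in[0,1]$ is $\mathrm{SW}^S(q)=q\lambda\,(R-C\,W(q\lambda))$ (strictly concave on $[0,1]$), and $q^S_s$ is its maximizer over $[0,1]$. The individual (no-fee) equilibrium $q^S_e$ is defined as follows: if $R-C\,\mathbb{E}[W(\Lambda)]\ge0$ then $q^S_e=1$; otherwise $q^S_e$ is the unique $q\in[0,1]$ with $C\,\mathbb{E}[W(q\Lambda)]=R$. *)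

(* Defs.v *)
From mathcomp Require Import all_boot all_order all_algebra.
From mathcomp Require Import all_classical all_reals all_analysis.
Set Implicit Arguments. Unset Strict Implicit. Unset Printing Implicit Defensive.
Import Order.TTheory GRing.Theory Num.Theory.
Local Open Scope classical_set_scope.
Local Open Scope ring_scope.

Section mm1.
Context {d : measure_display} {T : measurableType d} {R : realType}.

(* expected time in system of an M/M/1 queue at effective arrival rate x *)
Definition W (mu x : R) : R := (mu - x)^-1.

Definition SW (lam Rw C mu q : R) : R := q * lam * (Rw - C * W mu (q * lam)).

Definition EW (P : probability T R) (L : T -> R) (mu q : R) : \bar R :=
  ('E_P[fun w => W mu (q * L w)])%E.

Definition rv_support (P : probability T R) (L : T -> R) : set R :=
  [set x | forall e : R, 0 < e -> (0 < P [set w | (`|L w - x| < e)%R])%E].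

Definition support_min (P : probability T R) (L : T -> R) (a : R) : Prop :=
  rv_support P L a /\ (forall x, rv_support P L x -> a <= x).

Definition support_max (P : probability T R) (L : T -> R) (b : R) : Prop :=
  rv_support P L b /\ (forall x, rv_support P L x -> x <= b).

Definition nondegenerate_rv (P : probability T R) (L : T -> R) : Prop :=
  ~ (exists c : R, P [set w | L w = c] = 1%E).

Definition is_qs (lam Rw C mu qs : R) : Prop :=
  0 <= qs <= 1 /\ forall q, 0 <= q <= 1 -> SW lam Rw C mu q <= SW lam Rw C mu qs.

(* q^S_e : the individual (no-fee) equilibrium *)
Definition is_qe (P : probability T R) (L : T -> R) (Rw C mu qe : R) : Prop :=
  ((0 <= Rw%:E - C%:E * EW P L mu 1)%E /\ qe = 1)
  \/ ((Rw%:E - C%:E * EW P L mu 1 < 0)%E /\ 0 <= qe <= 1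
      /\ (C%:E * EW P L mu qe = Rw%:E)%E).

End mm1.

(* Main.v *)
Require Import Defs.
From mathcomp Require Import all_boot all_order all_algebra.
From mathcomp Require Import all_classical all_reals all_analysis.
From mathcomp Require Import ring lra.
Import Order.TTheory GRing.Theory Num.Theory.
Local Open Scope classical_set_scope.
Local Open Scope ring_scope.

Lemma minv (R : realType) : measurable_fun [set: R] (@GRing.inv R).
Proof.
rewrite -(setvU [set (0:R)]).
apply/measurable_funU; [exact: measurableC | by [] |].
split; last exact: measurable_fun_set1.
apply: measurable_realfun.open_continuous_measurable_fun.
  by rewrite openC; exact: closed_eq.
move=> x /set_mem /= x0; apply: inv_continuous; exact/eqP.
Qed.

Lemma key (R : realFieldType) (mu a b y c : R) : 0 <= a -> a < b -> b <= 1 ->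
  0 < c -> c <= y -> y < mu ->
  (mu - a * y)^-1 + (b - a) * c / mu ^+ 2 <= (mu - b * y)^-1.
Proof.
move=> a0 ab b1 c0 cy ymu.
have y0 : 0 < y by exact: lt_le_trans c0 cy.
have mu0 : 0 < mu by exact: lt_trans y0 ymu.
have v0 : 0 < mu - b * y by nra.
have u0 : 0 < mu - a * y by nra.
have vu : mu - a * y <= mu by nra.
rewrite -lerBrDl.
have -> : (mu - b * y)^-1 - (mu - a * y)^-1 = (b - a) * y / ((mu - a * y) * (mu - b * y)).
  by field; apply/andP; split; apply: lt0r_neq0.
rewrite ler_pdivrMr ?exprn_gt0 // mulrAC ler_pdivlMr ?mulr_gt0 //.
have h1 : (mu - a * y) * (mu - b * y) <= mu ^+ 2 by rewrite expr2; apply: ler_pM; nra.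
have h2 : (b - a) * c <= (b - a) * y by apply: ler_pM; lra.
apply: (le_trans (ler_pM _ _ h2 h1)); nra.
Qed.

Lemma key2 (R : realFieldType) (mu a b y : R) : 0 <= a -> a <= b -> b <= 1 ->
  0 <= y -> y < mu -> (mu - a * y)^-1 <= (mu - b * y)^-1.
Proof.
move=> a0 ab b1 y0 ymu.
have v0 : 0 < mu - b * y by nra.
have u0 : 0 < mu - a * y by nra.
rewrite lef_pV2 ?posrE //; nra.
Qed.

Section S.
Context d (T : measurableType d) (R : realType) (P : probability T R) (L : {RV P >-> R}).

Lemma mball x e : measurable [set w | `|L w - x| < e].
Proof.
have -> : [set w | `|L w - x| < e] = L @^-1` `](x - e), (x + e)[.
  by apply/seteqP; split => w /=; rewrite in_itv /= ltr_distl.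
exact: measurable_funPTI.
Qed.

Lemma mW mu q : measurable_fun [set: T] (fun w => W mu (q * L w)).
Proof.
rewrite /W; apply: measurableT_comp; first exact: minv.
apply: measurable_realfun.measurable_funB => //; apply: measurable_realfun.measurable_funM => //.
Qed.


Lemma tail_negl lmax : (forall x, rv_support P L x -> x <= lmax) -> 0 <= lmax ->
  P.-negligible [set w | lmax < L w].
Proof.
move=> hsup l0.
pose B (n k : nat) := [set w | `|L w - k%:R / n.+1%:R| < n.+1%:R^-1].
pose F n k := B n k `&` [set _ | P (B n k) = 0%E].
apply: (@negligibleS _ _ _ _ (\bigcup_n \bigcup_k F n k)).
- move=> w /= hw.
  have nsup : ~ rv_support P L (L w) by move=> /hsup; rewrite leNgt hw.
  have [e e0 Pe] : exists2 e, 0 < e & P [set w' | `|L w' - L w| < e] = 0%E.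
    apply: contrapT => H; apply: nsup => e e0; rewrite lt0e measure_ge0 andbT.
    by apply/eqP => Pe0; apply: H; exists e.
  set n := Num.truncn (2 / e).
  have N0 : 0 < n.+1%:R :> R by rewrite ltr0n.
  have hN : 2 / e < n.+1%:R := truncnS_gt _.
  rewrite ltr_pdivrMr // in hN.
  have x0 : 0 <= L w * n.+1%:R by rewrite mulr_ge0 // ?ler0n // (le_trans l0) // ltW.
  set k := Num.truncn (L w * n.+1%:R).
  have /andP [k1 k2] : (k%:R <= L w * n.+1%:R) && (L w * n.+1%:R < k%:R + 1).
    by rewrite natr1; exact: truncn_itv.
  have Bw : B n k w.
    rewrite /B /= ltr_distl; apply/andP; split.
      by rewrite -[X in _ - X]mul1r -mulrBl ltr_pdivrMr //; lra.
    by rewrite -[X in _ + X]mul1r -mulrDl ltr_pdivlMr //; lra.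
  have BP : P (B n k) = 0%E.
    apply/eqP; rewrite -measure_le0 -Pe le_measure // ?inE; try exact: mball.
    move=> w' /= Bw'; rewrite /B /= in Bw.
    apply: (le_lt_trans (ler_distD (k%:R / n.+1%:R) _ _)).
    rewrite distrC in Bw.
    have : `|L w' - k%:R / n.+1%:R| + `|k%:R / n.+1%:R - L w| < 2 / n.+1%:R.
      by rewrite -[2]/(1 + 1) mulrDl mul1r; exact: ltrD.
    move/lt_le_trans; apply; rewrite ler_pdivrMr //; apply: ltW.
    by rewrite mulrC.
  by exists n => //; exists k.
- apply: negligible_bigcup => n; apply: negligible_bigcup => k.
  case: (pselect (P (B n k) = 0%E)) => h.
  + apply: (@negligibleS _ _ _ _ (B n k)); first by move=> w [].
    by apply/negligibleP => //; exact: mball.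
  + apply: (@negligibleS _ _ _ _ set0); first by move=> w [_ /= ?].
    exact: negligible_set0.
Qed.


Lemma pos_mass lmax : rv_support P L lmax -> 0 < lmax ->
  (0 < P [set w | (lmax / 2 < L w)%R])%E.
Proof.
move=> hs l0; have := hs (lmax / 2) (divr_gt0 l0 (ltr0Sn _ 1)).
move/lt_le_trans; apply; rewrite le_measure // ?inE; first exact: mball.
  have -> : [set w | lmax / 2 < L w] = L @^-1` `](lmax / 2), +oo[.
    by apply/seteqP; split => w /=; rewrite in_itv /= andbT.
  exact: measurable_funPTI.
by move=> w /=; rewrite ltr_distl => /andP [h _]; lra.
Qed.

Lemma mWf mu q (f : T -> R) : measurable_fun [set: T] f ->
  measurable_fun [set: T] (fun w => W mu (q * f w)).
Proof.
move=> mf; rewrite /W; apply: measurableT_comp; first exact: minv.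
apply: measurable_realfun.measurable_funB => //; apply: measurable_realfun.measurable_funM => //.
Qed.

Section int.
Variables (mu lmax : R).
Hypotheses (l0 : 0 <= lmax) (lmu : lmax < mu) (Lge0 : forall w, 0 <= L w).
Hypothesis hneg : P.-negligible [set w | lmax < L w].

Let m w := Num.min (L w) lmax.
Let h (q : R) w := W mu (q * m w).

Let m_bounds w : 0 <= m w <= lmax.
Proof.
rewrite /m; case: (leP (L w) lmax) => H.
  by rewrite Lge0 H.
by rewrite l0 lexx.
Qed.

Let mm : measurable_fun [set: T] m.
Proof. exact: measurable_realfun.measurable_minr. Qed.

Let mh q : measurable_fun [set: T] (h q).
Proof. exact: mWf. Qed.

Lemma EW_h q : EW P L mu q = (\int[P]_w (h q w)%:E)%E.
Proof.
rewrite /EW unlock; apply: ae_eq_integral => //.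
- by apply/measurable_realfun.measurable_EFinP; exact: mWf.
- by apply/measurable_realfun.measurable_EFinP; exact: mh.
- apply: negligibleS hneg => w /= H; rewrite ltNge; apply/negP => Hle.
  by apply: H => _; rewrite /h /m min_l.
Qed.

Let hb (q : R) (w : T) : 0 <= q <= 1 -> 0 < h q w <= (mu - lmax)^-1.
Proof.
move=> /andP [q0 q1]; have /andP [m0 ml] := m_bounds w.
have qm : q * m w <= lmax by nra.
have qm0 : 0 <= q * m w by nra.
rewrite /h /W; apply/andP; split; first by rewrite invr_gt0 subr_gt0; exact: le_lt_trans qm lmu.
by rewrite lef_pV2 ?posrE ?subr_gt0 ?lerB //; exact: le_lt_trans qm lmu.
Qed.

Lemma int_h_fin (q : R) : 0 <= q <= 1 -> (\int[P]_w (h q w)%:E)%E \is a fin_num.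
Proof.
move=> q01.
rewrite ge0_fin_numE; last first.
  by apply: integral_ge0 => w _; rewrite lee_fin; have /andP [/ltW ? _] := hb q w q01.
apply: (@le_lt_trans _ _ (\int[P]_(w in setT) (cst ((mu - lmax)^-1)%:E) w)%E).
  apply: ge0_le_integral => //.
  - by move=> w _; rewrite lee_fin; have /andP [/ltW ? _] := hb q w q01.
  - by apply/measurable_realfun.measurable_EFinP; exact: mh.
  - by move=> w _; rewrite lee_fin; have /andP [_ ?] := hb q w q01.
rewrite integral_cst //; have P1 : P [set: T] = 1%E by exact: probability_setT.
set X := (X in (_ * X)%E); have -> : X = 1%E by exact: probability_setT.
by rewrite mule1 ltry.
Qed.

Lemma int_h_lt (a b c : R) : 0 <= a -> a < b -> b <= 1 -> 0 < c -> c < lmax ->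
  (0 < P [set w | (c < L w)%R])%E ->
  (\int[P]_w (h a w)%:E < \int[P]_w (h b w)%:E)%E.
Proof.
move=> a0 ab b1 c0 cl PS.
set S := [set w | (c < L w)%R].
have mS : measurable S.
  have -> : S = L @^-1` `]c, +oo[.
    by apply/seteqP; split => w /=; rewrite in_itv /= andbT.
  exact: measurable_funPTI.
have mu0 : 0 < mu by apply: le_lt_trans lmu.
set dl := (b - a) * c / mu ^+ 2.
have dl0 : 0 < dl by rewrite /dl divr_gt0 ?exprn_gt0 // mulr_gt0 // subr_gt0.
have pt w : h a w + dl * \1_S w <= h b w.
  have /andP [m0 ml] := m_bounds w.
  rewrite /h /W; case: (pselect (S w)) => Sw.
  - rewrite indicE mem_set // mulr1; apply: key => //; last exact: le_lt_trans ml lmu.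
    rewrite /m; case: (leP (L w) lmax) => _ //; [exact: ltW | exact: ltW].
  - rewrite indicE memNset // mulr0 addr0; apply: key2 => //.
      exact: ltW.
    exact: le_lt_trans ml lmu.
have ind0 w : 0 <= \1_S w :> R by rewrite indicE ler0n.
have mi : measurable_fun [set: T] (fun w => dl * \1_S w).
  apply: measurable_realfun.measurable_funM => //.
have a01 : 0 <= a <= 1 by rewrite a0 (ltW (lt_le_trans ab b1)).
have H : (\int[P]_w ((h a w + dl * \1_S w)%:E) <= \int[P]_w (h b w)%:E)%E.
  apply: ge0_le_integral => //.
  - move=> w _; rewrite lee_fin; apply: addr_ge0; last exact: mulr_ge0 (ltW dl0) (ind0 w).
    by have /andP [/ltW ? _] := hb a w a01.
  - apply/measurable_realfun.measurable_EFinP.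
    by apply: measurable_realfun.measurable_funD => //; exact: mh.
  - by apply/measurable_realfun.measurable_EFinP; exact: mh.
  - by move=> w _; rewrite lee_fin; exact: pt.
have E : (\int[P]_w ((h a w + dl * \1_S w)%:E) =
          \int[P]_w (h a w)%:E + dl%:E * P S)%E.
  under eq_integral do rewrite EFinD EFinM.
  rewrite ge0_integralD //.
  - rewrite ge0_integralZl_EFin //; try exact: ltW.
    by rewrite integral_indic // setIT.
  all: first [ by move=> w _; rewrite lee_fin; have /andP [/ltW ? _] := hb a w a01
             | by apply/measurable_realfun.measurable_EFinP; exact: mh
             | by move=> w _; rewrite -EFinM lee_fin; exact: mulr_ge0 (ltW dl0) (ind0 w)
             | by move=> w _; rewrite lee_fin; exact: mulr_ge0 (ltW dl0) (ind0 w)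
             | apply/measurable_realfun.measurable_EFinP; by under eq_fun do rewrite -EFinM /=
             | by apply/measurable_realfun.measurable_EFinP; exact: measurable_realfun.measurable_indic
             | idtac ].
  apply: measurable_funeM.
  by apply/measurable_realfun.measurable_EFinP; exact: measurable_realfun.measurable_indic.
apply: lt_le_trans H; rewrite E lteDl ?int_h_fin //.
by apply: mule_gt0 => //; rewrite lte_fin.
Qed.


End int.

End S.

Theorem proposition2 (d : measure_display) (T : measurableType d) (R : realType)
  (P : probability T R) (L : {RV P >-> R})
  (lam mu Rw C lmin lmax qs qe : R) :
  0 < lam -> 0 < C -> C / mu <= Rw ->
  (forall w, 0 <= L w) -> nondegenerate_rv P L ->
  support_min P L lmin -> support_max P L lmax ->
  0 <= lmin -> lmin < lam -> lam < lmax -> lmax < mu ->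
  is_qs lam Rw C mu qs -> is_qe P L Rw C mu qe ->
  let ps := (Rw%:E - C%:E * EW P L mu qs)%E in
  ((0 <= ps)%E -> qs <= qe) /\ (ps = 0%E -> qs = qe).
Proof.
move=> lam0 C0 _ Lge0 _ _ [smax hmax] lmin0 lminlam lamlmax lmaxmu [qs01 _] hqe ps.
have lmax0 : 0 < lmax by lra.
have hneg := @tail_negl _ _ _ P L lmax hmax (ltW lmax0).
have PS := @pos_mass _ _ _ P L lmax smax lmax0.
pose e q := fine (EW P L mu q).
have Ee q : 0 <= q <= 1 -> EW P L mu q = (e q)%:E.
  move=> q01; rewrite /e fineK // (@EW_h _ _ _ P L mu lmax hneg).
  exact: (@int_h_fin _ _ _ P L mu lmax (ltW lmax0) lmaxmu Lge0).
have mono a b : 0 <= a -> a < b -> b <= 1 -> e a < e b.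
  move=> a0 ab b1.
  have a01 : 0 <= a <= 1 by rewrite a0 (ltW (lt_le_trans ab b1)).
  have b01 : 0 <= b <= 1 by rewrite b1 andbT (le_trans a0 (ltW ab)).
  rewrite -lte_fin -Ee // -Ee // !(@EW_h _ _ _ P L mu lmax hneg).
  apply: (@int_h_lt _ _ _ P L mu lmax (ltW lmax0) lmaxmu Lge0 a b (lmax / 2)) => //; lra.
have q01 : 0 <= (1:R) <= 1 by rewrite ler01 lexx.
have [qs0 qs1] := andP qs01.
rewrite /ps Ee //.
case: hqe => [[h1 ->] | [h1 [qe01 h2]]].
  rewrite Ee // in h1.
  split => // /eqP; rewrite -EFinM -EFinB eqe subr_eq0 => /eqP hp.
  apply/eqP; rewrite eq_le qs1 /=; rewrite leNgt; apply/negP => hlt.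
  have := mono _ _ qs0 hlt (lexx _).
  rewrite -EFinM -EFinB lee_fin in h1; nra.
have [qe0 qe1] := andP qe01.
rewrite Ee // -EFinM in h2; move: h2 => [h2].
split.
  rewrite -EFinM -EFinB lee_fin => hp.
  rewrite leNgt; apply/negP => hlt.
  have := mono _ _ qe0 hlt qs1; nra.
move=> /eqP; rewrite -EFinM -EFinB eqe subr_eq0 => /eqP hp.
case: (ltgtP qs qe) => // hlt.
  have := mono _ _ qs0 hlt qe1; nra.
have := mono _ _ qe0 hlt qs1; nra.
Qed.
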